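(* Let $G=(V,E,H)$ be a HEDG and $\mathbb{P}_V$ a probability distribution on $\mathcal{X}_V=\prod_{v\in V}\mathcal{X}_v$ (standard Borel spaces) such that $(G,\mathbb{P}_V)$ satisfies the loop-wisely solvable structural equations property (lsSEP). Then for every subset $W\subseteq V$, the pair $(G^{\mathrm{marg}\setminus W},\mathbb{P}_{V\setminus W})$ also satisfies lsSEP, where $\mathbb{P}_{V\setminus W}$ is the marginal of $\mathbb{P}_V$ on $\mathcal{X}_{V\setminus W}$.
   Context: HEDG $G=(V,E,H)$: $V$ finite, $E\subseteq V\times V$ (self-loops allowed), $H$ a simplicial complex on $V$ (contains singletons, closed under subsets), $\tilde H$ its inclusion-maximal elements. $\mathrm{Pa}^G(S)=\{u:(u,v)\in E\text{ for some }v\in S\}$. A strongly connected induced sub-HEDG (loop) is a nonempty $S\subseteq V$ such that any two nodes of $S$ are joined by directed paths in both directions using only nodes of $S$ (singletons are loops). Marginalization $G^{\mathrm{marg}\setminus W}=(V\setminus W,E',H')$: $v_1\to v_2\in E'$ iff $G$ has a directed path $v_1\to u_1\to\cdots\to u_r\to v_2$ ($r\ge0$, all $u_i\in W$); $F'\subseteq V\setminus W$ is in $H'$ iff there is $F\in H$, $F\subseteq F'\cup W$, such that each $v\in F'$ lies in $F\setminus W$ or is reached by a directed path $u_1\to\cdots\to u_r\to v$ ($r\ge1$, $u_i\in W$, $u_1\in F$). lsSEP for $(G,\mathbb{P}_V)$: there exist a probability space $(\Omega,\mathfrak A,\mathbb P)$, jointly independent random variables $E_F:\Omega\to\mathcal{E}_F$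 ($F\in\tilde H$) in standard Borel spaces, measurable $f_v:\mathcal{X}_{\mathrm{Pa}^G(v)}\times\mathcal{E}_v\to\mathcal{X}_v$ with $\mathcal{E}_v=\prod_{F\in\tilde H,v\in F}\mathcal{E}_F$, random variables $X_v:\Omega\to\mathcal{X}_v$ with $X_v=f_v(X_{\mathrm{Pa}^G(v)},E_v)$ a.s. ($E_v=(E_F)_{F\ni v}$) and joint law of $(X_v)_{v\in V}$ equal to $\mathbb{P}_V$, and for every loop $S$ and every $v\in S$ a measurable $\hat g_{S,v}:\mathcal{X}_{\mathrm{Pa}^G(S)\setminus S}\times\mathcal{E}_S\to\mathcal{X}_v$ with $X_v=\hat g_{S,v}(X_{\mathrm{Pa}^G(S)\setminus S},E_S)$ a.s., where $\mathcal{E}_S=\prod_{F\in\tilde H,F\cap S\ne\emptyset}\mathcal{E}_F$ and $E_S=(E_F)_{F\cap S\neq\emptyset}$. *)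

(* Defs.v *)
From HB Require Import structures.
From mathcomp Require Import all_boot all_order all_algebra.
From mathcomp Require Import all_classical all_reals all_analysis.
Set Implicit Arguments. Unset Strict Implicit. Unset Printing Implicit Defensive.
Import Order.TTheory GRing.Theory Num.Theory.

Record HEDG (V : finType) := MkHEDG {
  hedge : rel V ;
  hcomplex : {set {set V}}
}.

Definition is_simplicial_complex (V : finType) (H : {set {set V}}) : Prop :=
  (forall v : V, [set v] \in H) /\
  (forall F F' : {set V}, F \in H -> F' \subset F -> F' \in H).

Definition is_HEDG (V : finType) (G : HEDG V) : Prop :=
  is_simplicial_complex (hcomplex G).

Definition maxfaces (V : finType) (G : HEDG V) : {set {set V}} :=
  [set F in hcomplex G |
     [forall F' in hcomplex G, (F \subset F') ==> (F' == F)]].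

(** Index type of the maximal faces (the index set of the exogenous
    random variables E_F). *)
Definition Fidx (V : finType) (G : HEDG V) : finType :=
  {F : {set V} | F \in maxfaces G}.

Definition pa (V : finType) (G : HEDG V) (S : {set V}) : {set V} :=
  [set u | [exists v in S, hedge G u v]].

Definition loop (V : finType) (G : HEDG V) (S : {set V}) : bool :=
  (S != finset.set0) &&
  [forall a in S, forall b in S,
     connect [rel x y | [&& x \in S, y \in S & hedge G x y]] a b].

Definition edgeW (V : finType) (G : HEDG V) (W : {set V}) : rel V :=
  [rel x y | [&& x \in W, y \in W & hedge G x y]].

Definition dpath_via (V : finType) (G : HEDG V) (W : {set V}) (x y : V) : bool :=
  hedge G x y ||
  [exists u1, exists ur,
     [&& u1 \in W, ur \in W, hedge G x u1, connect (edgeW G W) u1 ur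
       & hedge G ur y]].

Definition reached_from_via (V : finType) (G : HEDG V) (W F : {set V}) (y : V) : bool :=
  [exists u1 in F, exists ur,
     [&& u1 \in W, ur \in W, connect (edgeW G W) u1 ur & hedge G ur y]].

Definition subV (V : finType) (W : {set V}) : finType := {v : V | v \notin W}.

Definition marg (V : finType) (G : HEDG V) (W : {set V}) : HEDG (subV W) :=
  MkHEDG
    [rel a b : subV W | dpath_via G W (val a) (val b)]
    [set F' : {set subV W} |
       [exists F in hcomplex G,
          (F \subset (val @: F') :|: W) &&
          [forall v in val @: F',
             (v \in F :\: W) || reached_from_via G W F v]]].

Local Open Scope classical_set_scope.
Local Open Scope ring_scope.

Section StandardBorel.
Variable R : realType.

(** A measurable space is standard Borel if its sigma-algebra is the Borel
    sigma-algebra of some Polish (separable, completely metrizable)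
    topology; we express this through a complete separable metric
    generating the sigma-algebra. *)
Definition metric_open (T : Type) (dist : T -> T -> R) (A : set T) : Prop :=
  forall x, A x -> exists e : R, 0 < e /\ forall y, dist x y < e -> A y.

Definition polish_metric d (T : measurableType d) (dist : T -> T -> R) : Prop :=
  (forall x y : T, dist x y = 0 <-> x = y) /\
      (forall x y : T, dist x y = dist y x) /\
      (forall x y z : T, dist x z <= dist x y + dist y z) /\
      (exists D : set T, countable D /\
         forall x (e : R), 0 < e -> exists y, D y /\ dist x y < e) /\
      (forall u : nat -> T,
         (forall e : R, 0 < e -> exists N, forall m n, (N <= m)%N -> (N <= n)%N ->
             dist (u m) (u n) < e) ->
         exists l : T, forall e : R, 0 < e -> exists N, forall n, (N <= n)%N ->
             dist (u n) l < e) /\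
    (forall A : set T, measurable A <-> <<s metric_open dist >> A).

Definition standard_borel d (T : measurableType d) : Prop :=
  exists dist : T -> T -> R, polish_metric dist.

End StandardBorel.

(** Product sigma-algebra on the dependent product prod_(i:I) T_i, generated
    by the measurable cylinders { x | x i \in B }. *)
Definition cylinders (I : Type) (dT : I -> measure_display)
    (T : forall i, measurableType (dT i)) : set (set (forall i, T i)) :=
  [set A | exists i (B : set (T i)), measurable B /\ A = (fun x => x i) @^-1` B].

Arguments cylinders {I dT} T.

Definition piT (I : Type) (dT : I -> measure_display)
    (T : forall i, measurableType (dT i)) :=
  g_sigma_algebraType (cylinders T).

Definition restr (V : finType) (W : {set V}) (dX : V -> measure_display)
    (X : forall v, measurableType (dX v)) (x : piT X) : piT (fun u : subV W => X (val u)) :=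
  fun u => x (val u).

Arguments restr {V} W {dX} X x.

Definition marginal (R : realType) (V : finType) (W : {set V})
    (dX : V -> measure_display) (X : forall v, measurableType (dX v))
    (P : set (piT X) -> \bar R) : set (piT (fun u : subV W => X (val u))) -> \bar R :=
  fun B => P (restr W X @^-1` B).

Arguments piT {I dT} T.
Arguments marginal {R V} W {dX} X P.

Definition mutually_independent (R : realType) dO (Omega : measurableType dO)
    (P : probability Omega R) (I : finType) (dE : I -> measure_display)
    (E : forall i, measurableType (dE i)) (Ev : forall i, Omega -> E i) : Prop :=
  forall A : forall i, set (E i), (forall i, measurable (A i)) ->
    P (\bigcap_(i in [set: I]) (Ev i @^-1` A i)) = (\prod_(i : I) P (Ev i @^-1` A i))%E.

Definition lsSEP (R : realType) (V : finType) (G : HEDG V)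
    (dX : V -> measure_display) (X : forall v, measurableType (dX v))
    (PV : set (piT X) -> \bar R) : Prop :=
  exists (dO : measure_display) (Omega : measurableType dO) (P : probability Omega R)
    (dE : Fidx G -> measure_display) (E : forall F, measurableType (dE F))
    (Ev : forall F, Omega -> E F)
    (f : forall v, piT X * piT E -> X v)
    (Xv : forall v, Omega -> X v),
  (forall F, standard_borel R (E F)) /\
  (forall F, measurable_fun setT (Ev F)) /\
  mutually_independent P Ev /\
  (forall v, measurable_fun setT (Xv v)) /\
  (* f_v is a measurable function of (x_{Pa(v)}, e_v), e_v = (e_F)_{F ∋ v},
     encoded as a measurable function of (x, e) depending only on these
     coordinates *)
  (forall v, measurable_fun setT (f v) /\
     forall (x x' : piT X) (e e' : piT E),
       (forall u, u \in pa G [set v]%SET -> x u = x' u) ->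
       (forall F : Fidx G, v \in val F -> e F = e' F) ->
       f v (x, e) = f v (x', e')) /\
  (forall v, {ae P, forall w, Xv v w = f v ((fun u => Xv u w) : piT X,
                                           (fun F => Ev F w) : piT E)}) /\
  (forall B : set (piT X), measurable B ->
     P ((fun w => (fun u => Xv u w) : piT X) @^-1` B) = PV B) /\
  (forall S : {set V}, loop G S -> forall v, v \in S ->
     exists g : piT X * piT E -> X v,
       measurable_fun setT g /\
       (forall (x x' : piT X) (e e' : piT E),
          (forall u, u \in (pa G S :\: S)%SET -> x u = x' u) ->
          (forall F : Fidx G, (val F :&: S != finset.set0)%SET -> e F = e' F) ->
          g (x, e) = g (x', e')) /\
       {ae P, forall w, Xv v w = g ((fun u => Xv u w) : piT X,
                                  (fun F => Ev F w) : piT E)}).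

Arguments lsSEP {R V} G {dX} X PV.

(* Main.v *)
Require Import Defs.
From HB Require Import structures.
From mathcomp Require Import all_boot all_order all_algebra.
From mathcomp Require Import all_classical all_reals all_analysis.
Set Implicit Arguments. Unset Strict Implicit. Unset Printing Implicit Defensive.
Import Order.TTheory GRing.Theory Num.Theory.
Local Open Scope classical_set_scope.
Local Open Scope ring_scope.

Section piT_meas.
Context (I : Type) (dT : I -> measure_display) (T : forall i, measurableType (dT i)).

Lemma piT_measurableE : @measurable _ (piT T) = <<s cylinders T >>.
Proof. by []. Qed.

Lemma measurable_eval i : measurable_fun setT (fun x : piT T => x i).
Proof.
move=> _ B mB; rewrite setTI; apply: sub_sigma_algebra; exists i, B; split => //.
Qed.

Lemma measurable_into_piT d (A : measurableType d) (f : A -> piT T) :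
  (forall i, measurable_fun setT (fun a => f a i)) -> measurable_fun setT f.
Proof.
move=> mf; apply: (@measurability _ _ A (piT T) setT f (cylinders T) piT_measurableE).
move=> _ [C [i [B [mB ->]]] <-].
have := mf i measurableT B mB.
by congr (measurable _).
Qed.
End piT_meas.

Section boxes.
Context (K : finType) (dT : K -> measure_display) (T : forall k, measurableType (dT k)).

Definition isbox (A : set (piT T)) := exists B : forall k, set (T k),
  (forall k, measurable (B k)) /\ A = [set x | forall k, B k (x k)].

Lemma isbox_setT : isbox setT.
Proof. by exists (fun k => setT); split => //; apply/seteqP; split => x. Qed.

Lemma isbox_setI : setI_closed isbox.
Proof.
move=> A1 A2 [B1 [mB1 ->]] [B2 [mB2 ->]]; exists (fun k => B1 k `&` B2 k); split.
  by move=> k; apply: measurableI.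
by apply/seteqP; split => x /=; [move=> [h1 h2] k; split|move=> h; split => k; case: (h k)].
Qed.

Lemma isbox_measurable A : isbox A -> measurable A.
Proof.
move=> [B [mB ->]].
have -> : [set x : piT T | forall k, B k (x k)] = \bigcap_(k in [set: K]) ((fun x : piT T => x k) @^-1` B k).
  by apply/seteqP; split => x /= h k; [move=> _|]; apply: h.
apply: fin_bigcap_measurable; first exact: finite_finset.
move=> k _; have := @measurable_eval _ _ T k measurableT _ (mB k); by rewrite setTI.
Qed.

Lemma cylinder_isbox A : cylinders T A -> isbox A.
Proof.
move=> [i [B0 [mB0 ->]]].
exists (fun k => fun t => forall e : i = k, (eq_rect i (fun k => set (T k)) B0 k e) t); split.
  move=> k; case: (eqVneq i k) => [<-|ne].
    rewrite (_ : (fun t => _) = B0) //; apply/funext => t; apply/propext; split.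
      by move=> /(_ erefl).
    by move=> h e; rewrite (eq_irrelevance e erefl).
  rewrite (_ : (fun t => _) = setT) //; apply/funext => t; apply/propext; split => // _ e.
  by exfalso; move: ne; rewrite e eqxx.
apply/seteqP; split => x /=.
  by move=> h k e; case: k / e.
by move=> /(_ i erefl).
Qed.

Lemma piT_measurable_box : @measurable _ (piT T) = <<s isbox >>.
Proof.
apply/seteqP; split.
  rewrite piT_measurableE; apply: sub_sigma_algebra2; exact: cylinder_isbox.
apply: smallest_sub; first exact: sigma_algebra_measurable.
exact: isbox_measurable.
Qed.
End boxes.

Section group_indep.
Context (R : realType) dO (Omega : measurableType dO) (P : probability Omega R)
  (I J : finType) (dE : I -> measure_display) (E : forall i, measurableType (dE i))
  (Ev : forall i, Omega -> E i) (a : I -> J).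
Hypothesis mEv : forall i, measurable_fun setT (Ev i).
Hypothesis ind : mutually_independent P Ev.

Definition grp (j : J) : finType := {i : I | a i == j}.
Definition EG j := piT (fun k : grp j => E (val k)).
Definition Yg j (w : Omega) : EG j := fun k => Ev (val k) w.
Arguments Yg : clear implicits.

Lemma measurable_Yg j : measurable_fun setT (Yg j).
Proof. by apply: measurable_into_piT => k; exact: mEv. Qed.

Lemma measurable_preYg j A : measurable A -> measurable (Yg j @^-1` A).
Proof. by move=> mA; have := measurable_Yg measurableT mA; rewrite setTI. Qed.

Lemma measurable_preEv i A : measurable A -> measurable (Ev i @^-1` A).
Proof. by move=> mA; have := mEv measurableT mA; rewrite setTI. Qed.

Lemma indep_boxes (B : forall j (k : grp j), set (E (val k))) :
  (forall j k, measurable (B j k)) ->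
  P (\bigcap_(j in [set: J]) (Yg j @^-1` [set x | forall k, B j k (x k)])) =
  (\prod_j P (Yg j @^-1` [set x | forall k, B j k (x k)]))%E.
Proof.
move=> mB.
pose C i : set (E i) := B (a i) (exist _ i (eqxx (a i))).
have mC i : measurable (C i) by exact: mB.
have key j w : (forall k : grp j, B j k (Ev (val k) w)) <-> (forall i, a i == j -> C i (Ev i w)).
  split.
    move=> h i hi; have e := eqP hi; subst j.
    exact: (h (exist _ i (eqxx _))).
  move=> h [i hi] /=; have := h i hi; have e := eqP hi; subst j.
  by rewrite (eq_irrelevance hi (eqxx _)).
have grpE j : P (Yg j @^-1` [set x | forall k, B j k (x k)]) =
    (\prod_(i | a i == j) P (Ev i @^-1` C i))%E.
  pose D i := if a i == j then C i else setT.
  have -> : Yg j @^-1` [set x | forall k, B j k (x k)] = \bigcap_(i in [set: I]) (Ev i @^-1` D i).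
    apply/seteqP; split => w /=.
      move=> /key h i _; rewrite /D; case: ifP => // /h //.
    move=> h; apply/key => i hi; have := h i Logic.I; by rewrite /D hi.
  rewrite ind; last by move=> i; rewrite /D; case: ifP => _ //; exact: mC.
  rewrite [RHS]big_mkcond /=; apply: eq_bigr => i _; rewrite /D.
  by case: ifP => //; rewrite preimage_setT probability_setT.
have -> : \bigcap_(j in [set: J]) (Yg j @^-1` [set x | forall k, B j k (x k)]) =
    \bigcap_(i in [set: I]) (Ev i @^-1` C i).
  apply/seteqP; split => w /= h.
    move=> i _; have /key := h (a i) Logic.I; apply; exact: eqxx.
  by move=> j _; apply/key => i _; exact: h.
rewrite ind // [RHS](eq_bigr _ (fun j _ => grpE j)).
by rewrite (partition_big a predT).
Qed.

Definition eqA (A : forall j, set (EG j)) :=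
  P (\bigcap_(j in [set: J]) (Yg j @^-1` A j)) = (\prod_j P (Yg j @^-1` A j))%E.

Lemma all_boxes A : (forall j, isbox (A j)) -> eqA A.
Proof.
move=> hb.
pose B j := projT1 (cid (hb j)).
have hB j : (forall k, measurable (B j k)) /\ A j = [set x | forall k, B j k (x k)].
  exact: (projT2 (cid (hb j))).
have -> : A = fun j => [set x | forall k, B j k (x k)].
  by apply: functional_extensionality_dep => j; case: (hB j).
apply: indep_boxes => j; by case: (hB j).
Qed.

Lemma dfwith_id (A : forall j, set (EG j)) j0 : dfwith A j0 (A j0) = A.
Proof. by apply: functional_extensionality_dep => j; case: dfwithP. Qed.

Lemma indep_ind n : forall K : {set J}, (#|K| <= n)%N ->
  forall A : forall j, set (EG j), (forall j, j \in K -> measurable (A j)) ->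
  (forall j, j \notin K -> isbox (A j)) -> eqA A.
Proof.
elim: n => [|n IH] K hK A hm hb.
  apply: all_boxes => j; apply: hb.
  by move: hK; rewrite leqn0 cards_eq0 => /eqP ->; rewrite inE.
case: (set_0Vmem K) => [K0|[j0 j0K]].
  by apply: all_boxes => j; apply: hb; rewrite K0 inE.
pose K' := K :\ j0.
have hK' : (#|K'| <= n)%N.
  by move: hK; rewrite /K' (cardsD1 j0 K) j0K add1n ltnS.
have mAj j : j != j0 -> measurable (A j).
  move=> ne; case: (boolP (j \in K)) => jK; first exact: hm.
  by apply: isbox_measurable; apply: hb.
pose rest := \bigcap_(j in [set j | j != j0]) (Yg j @^-1` A j).
have mrest : measurable rest.
  apply: fin_bigcap_measurable; first exact: finite_finset.
  by move=> j /= ne; apply: measurable_preYg; exact: mAj.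
pose c := (\prod_(j | j != j0) P (Yg j @^-1` A j))%E.
have capE S : \bigcap_(j in [set: J]) (Yg j @^-1` dfwith A j0 S j) = Yg j0 @^-1` S `&` rest.
  apply/seteqP; split => w /=.
    move=> h; split; first by have := h j0 Logic.I; rewrite dfwithin.
    by move=> j /= ne; have := h j Logic.I; rewrite dfwithout // eq_sym.
  move=> [h1 h2] j _; case: dfwithP => // j' ne; apply: h2; by rewrite /= eq_sym.
have prodE S : (\prod_j P (Yg j @^-1` dfwith A j0 S j))%E = (P (Yg j0 @^-1` S) * c)%E.
  rewrite (bigD1 j0) //= dfwithin; congr (_ * _)%E.
  by apply: eq_bigr => j ne; rewrite dfwithout // eq_sym.
have boxcase S : isbox S -> P (Yg j0 @^-1` S `&` rest) = (P (Yg j0 @^-1` S) * c)%E.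
  move=> bS; rewrite -capE -prodE; apply: (IH K') => //.
    move=> j; rewrite /K' !inE => /andP[ne jK]; rewrite dfwithout 1?eq_sym//; exact: hm.
  move=> j; rewrite /K' !inE negb_and negbK; case: dfwithP => // j' ne.
  by rewrite eq_sym (negbTE ne) /= => /hb.
have cE : c = P rest.
  have := boxcase _ (isbox_setT _); rewrite preimage_setT setTI probability_setT mul1e.
  by move=> ->.
have c_ge0 : (0 <= fine c)%R by rewrite cE fine_ge0 // measure_ge0.
have cfin : c \is a fin_num by rewrite cE fin_num_measure.
have := @measure_unique _ R (EG j0) (@isbox _ _ _) (fun=> setT)
  (piT_measurable_box _) (@isbox_setI _ _ _) (fun=> isbox_setT _) (bigcup_const _ _)
  (pushforward (mrestr P mrest) (Yg j0)) (mscale (NngNum c_ge0) (pushforward P (Yg j0))).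
move=> /(_ (ex_intro _ 0%N Logic.I) (@measurable_Yg j0) (@measurable_Yg j0)) H.
have {}H := fun h1 h2 => H h1 h2 (A j0) (hm j0 j0K).
rewrite -(dfwith_id A j0) /eqA capE prodE.
suff: P (Yg j0 @^-1` A j0 `&` rest) = ((fine c)%:E * P (Yg j0 @^-1` A j0))%E.
  by rewrite fineK // muleC.
apply: H.
  move=> S bS; change (P (Yg j0 @^-1` S `&` rest) = ((fine c)%:E * P (Yg j0 @^-1` S))%E).
  by rewrite boxcase // fineK // muleC.
move=> _; change (P (Yg j0 @^-1` setT `&` rest) < +oo)%E.
apply: (le_lt_trans (probability_le1 _ _)); last exact: ltry.
apply: measurableI => //; exact: measurable_preYg.
Qed.

Lemma group_indep : mutually_independent P Yg.
Proof.
move=> A mA; apply: (@indep_ind _ finset.setT (leqnn _)) => //.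
by move=> j; rewrite inE.
Qed.
End group_indep.

Section metric_facts.
Context (R : realType) d (T : measurableType d) (dist : T -> T -> R).
Hypothesis hd : polish_metric dist.

Lemma pm_eq0 x y : dist x y = 0 <-> x = y. Proof. by case: hd. Qed.
Lemma pm_sym x y : dist x y = dist y x. Proof. by case: hd => _ []. Qed.
Lemma pm_tri x y z : dist x z <= dist x y + dist y z. Proof. by case: hd => _ [_ []]. Qed.
Lemma pm_xx x : dist x x = 0. Proof. exact/pm_eq0. Qed.
Lemma pm_ge0 x y : 0 <= dist x y.
Proof.
have := pm_tri x y x; rewrite pm_xx (pm_sym y x) => h.
by rewrite -(@pmulr_rge0 _ 2) // mulr2n mulrDl mul1r.
Qed.
Lemma pm_sep : exists D : set T, countable D /\
  forall x (e : R), 0 < e -> exists y, D y /\ dist x y < e.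
Proof. by case: hd => _ [_ [_ [h _]]]; exact: h. Qed.
Lemma pm_complete (u : nat -> T) :
  (forall e : R, 0 < e -> exists N, forall m n, (N <= m)%N -> (N <= n)%N -> dist (u m) (u n) < e) ->
  exists l : T, forall e : R, 0 < e -> exists N, forall n, (N <= n)%N -> dist (u n) l < e.
Proof. by case: hd => _ [_ [_ [_ [h _]]]]; exact: h. Qed.
Lemma pm_meas (A : set T) : measurable A <-> <<s metric_open dist >> A.
Proof. by case: hd => _ [_ [_ [_ [_ h]]]]; exact: h. Qed.

Lemma pm_ball_open c r : metric_open dist [set t | dist c t < r].
Proof.
move=> t /= ht; exists (r - dist c t); split; first by rewrite subr_gt0.
move=> y hy; apply: (le_lt_trans (pm_tri c t y)); by rewrite -ltrBrDl.
Qed.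

Lemma pm_ball_meas c r : measurable [set t | dist c t < r].
Proof. apply/pm_meas; apply: sub_sigma_algebra; exact: pm_ball_open. Qed.
End metric_facts.

Section sum_small.
Context (R : realType) (K : finType).
Lemma sum_small (f : K -> R) e : 0 < e -> (forall k, 0 <= f k) ->
  (forall k, f k < e / (#|K|%:R + 1)) -> \sum_k f k < e.
Proof.
move=> e0 f0 hf.
apply: (le_lt_trans (ler_sum _ (fun k _ => ltW (hf k)))).
rewrite sumr_const (_ : #|xpredT| = #|K|) // -[_ *+ #|K|]mulr_natr mulrAC ltr_pdivrMr; last by rewrite ltr_wpDl.
by rewrite mulrDr mulr1 ltrDl.
Qed.
End sum_small.

Section prod_polish.
Context (R : realType) (K : finType) (dT : K -> measure_display)
  (T : forall k, measurableType (dT k)) (dd : forall k, T k -> T k -> R).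
Arguments dd : clear implicits.
Hypothesis hd : forall k : K, polish_metric (dd k).

Definition pdist (x y : piT T) : R := \sum_k dd k (x k) (y k).

Lemma pdist_ge0 x y : 0 <= pdist x y.
Proof. by apply: sumr_ge0 => k _; apply: (pm_ge0 (hd _)). Qed.

Lemma d_le_pdist k x y : dd k (x k) (y k) <= pdist x y.
Proof.
rewrite /pdist (bigD1 k) //= lerDl; apply: sumr_ge0 => j _; exact: (pm_ge0 (hd _)).
Qed.

Lemma pdist_eq0 x y : pdist x y = 0 <-> x = y.
Proof.
split; last first.
  by move=> ->; rewrite /pdist big1 // => k _; apply: (pm_xx (hd _)).
move=> h; apply: functional_extensionality_dep => k.
apply/(pm_eq0 (hd k)); apply/eqP; rewrite eq_le (pm_ge0 (hd _)) // andbT.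
by rewrite -h d_le_pdist.
Qed.

Lemma pdist_sym x y : pdist x y = pdist y x.
Proof. by apply: eq_bigr => k _; apply: (pm_sym (hd _)). Qed.

Lemma pdist_tri x y z : pdist x z <= pdist x y + pdist y z.
Proof. rewrite /pdist -big_split /=; apply: ler_sum => k _; exact: (pm_tri (hd _)). Qed.

Let N := #|K|.

Lemma pdist_sep : exists D : set (piT T), countable D /\
  forall x (e : R), 0 < e -> exists y, D y /\ pdist x y < e.
Proof.
pose Dk k := projT1 (cid (pm_sep (hd k))).
have hDk k : countable (Dk k) /\ forall x (e : R), 0 < e -> exists y, Dk k y /\ dd k x y < e.
  exact: (projT2 (cid (pm_sep (hd k)))).
have inj k : exists f : T k -> nat, {in Dk k &, injective f}.
  by apply/countable_injP; case: (hDk k).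
pose fk k := projT1 (cid (inj k)).
have fkinj k : {in Dk k &, injective (fk k)} := projT2 (cid (inj k)).
exists [set x | forall k, Dk k (x k)]; split.
  apply/countable_injP; exists (fun x => pickle [ffun k => fk k (x k)]).
  move=> x y; rewrite !inE => hx hy /(pcan_inj pickleK) /ffunP h.
  apply: functional_extensionality_dep => k; have := h k; rewrite !ffunE.
  by apply: fkinj; rewrite inE.
move=> x e e0.
have e'0 : 0 < e / (N%:R + 1) by rewrite divr_gt0 // ltr_wpDl.
have ex k : exists y, Dk k y /\ dd k (x k) y < e / (N%:R + 1).
  by case: (hDk k) => _ /(_ (x k) _ e'0).
pose y k := projT1 (cid (ex k)).
have hy k : Dk k (y k) /\ dd k (x k) (y k) < e / (N%:R + 1) := projT2 (cid (ex k)).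
exists (y : piT T); split; first by move=> k; case: (hy k).
apply: sum_small => // k; [exact: (pm_ge0 (hd _))| by case: (hy k)].
Qed.

Lemma pdist_complete (u : nat -> piT T) :
  (forall e : R, 0 < e -> exists M, forall m n, (M <= m)%N -> (M <= n)%N -> pdist (u m) (u n) < e) ->
  exists l : piT T, forall e : R, 0 < e -> exists M, forall n, (M <= n)%N -> pdist (u n) l < e.
Proof.
move=> hc.
have ex k : exists l : T k, forall e : R, 0 < e -> exists M, forall n, (M <= n)%N -> dd k (u n k) l < e.
  apply: (pm_complete (hd k)) => e e0; have [M hM] := hc e e0; exists M => m n hm hn.
  exact: (le_lt_trans (d_le_pdist _ _ _) (hM m n hm hn)).
pose l k := projT1 (cid (ex k)).
have hl k := projT2 (cid (ex k)).
exists (l : piT T) => e e0.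
have e'0 : 0 < e / (N%:R + 1) by rewrite divr_gt0 // ltr_wpDl.
have exM k : exists M, forall n, (M <= n)%N -> dd k (u n k) (l k) < e / (N%:R + 1).
  exact: (hl k _ e'0).
pose M k := projT1 (cid (exM k)).
exists (\max_k M k)%N => n hn; apply: sum_small => // k; first exact: (pm_ge0 (hd _)).
apply: (projT2 (cid (exM k))); apply: leq_trans hn; exact: leq_bigmax.
Qed.

Definition pbox (c : piT T) (r : R) := [set y : piT T | forall k, dd k (c k) (y k) < r].

Lemma pbox_meas c r : measurable (pbox c r).
Proof.
apply: isbox_measurable; exists (fun k => [set t | dd k (c k) t < r]); split => //.
move=> k; exact: (pm_ball_meas (hd k)).
Qed.

Lemma pdist_meas (A : set (piT T)) : measurable A <-> <<s metric_open pdist >> A.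
Proof.
split.
  move=> mA.
  have cyl : cylinders T `<=` <<s metric_open pdist >>.
    move=> _ [k [B [mB ->]]].
    have hB : <<s metric_open (dd k) >> B := (pm_meas (hd k) B).1 mB.
    have h := g_sigma_preimageE setT (fun x : piT T => x k) (metric_open (dd k)).
    have : <<s setT, preimage_set_system setT (fun x : piT T => x k) (metric_open (dd k)) >>
       (setT `&` (fun x : piT T => x k) @^-1` B).
      by rewrite h; exists B.
    rewrite setTI; apply: sub_sigma_algebra2.
    move=> _ [B' oB' <-]; rewrite setTI => x /= hx.
    have [e [e0 he]] := oB' _ hx; exists e; split => // y hy; apply: he.
    exact: (le_lt_trans (d_le_pdist _ _ _) hy).
  exact: (smallest_sub (@smallest_sigma_algebra _ setT _) cyl mA).
move=> hA; apply: (smallest_sub (@sigma_algebra_measurable _ (piT T)) _ hA) => U oU.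
have [D [cD dD]] := pdist_sep.
have [f finj] : exists f : piT T -> nat, {in D &, injective f} by apply/countable_injP.
pose rr (m : nat) : R := (m.+1%:R)^-1.
pose Idx := {p : piT T * nat | D p.1 /\ pbox p.1 (rr p.2) `<=` U}.
have -> : U = \bigcup_(i : Idx) pbox (sval i).1 (rr (sval i).2).
  apply/seteqP; split; last by move=> y [[[c m] /= [_ sub]] _]; apply: sub.
  move=> x hx; have [e [e0 he]] := oU x hx.
  pose m := Num.truncn (N.+1%:R / e).
  have hm : N.+1%:R / e < m.+1%:R := truncnS_gt _.
  have rm0 : 0 < rr m by rewrite invr_gt0.
  have [c [Dc hc]] := dD x _ rm0.
  have sub : pbox c (rr m) `<=` U.
    move=> y hy; apply: he.
    apply: (le_lt_trans (pdist_tri x c y)).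
    have h2 : pdist c y <= rr m *+ N.
      apply: le_trans (ler_sum _ (fun k _ => ltW (hy k))) _.
      by rewrite sumr_const (_ : #|xpredT| = #|K|).
    apply: (@lt_le_trans _ _ (rr m + rr m *+ N)); first exact: ltr_leD.
    rewrite -mulrS -mulr_natr mulrC ltW // ltr_pdivrMr // mulrC -ltr_pdivrMr //.
    
  exists (exist _ (c, m) (conj Dc sub)) => //= k.
  by rewrite (pm_sym (hd k)); apply: (le_lt_trans (d_le_pdist _ _ _) hc).
apply: countable_bigcupT_measurable; last by move=> i; apply: pbox_meas.
apply/countable_injP; exists (fun i : Idx => pickle (f (sval i).1, (sval i).2)).
move=> [[c m] [Dc s1]] [[c' m'] [Dc' s2]] _ _ /= /(pcan_inj pickleK) [ef em].
have ec : c = c' by apply: finj => //; rewrite inE.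
subst c' m'; congr exist; exact: Prop_irrelevance.
Qed.

Lemma prod_polish : polish_metric pdist.
Proof.
split; first exact: pdist_eq0.
split; first exact: pdist_sym.
split; first exact: pdist_tri.
split; first exact: pdist_sep.
split; first exact: pdist_complete.
exact: pdist_meas.
Qed.
End prod_polish.

Lemma prod_standard_borel (R : realType) (K : finType) (dT : K -> measure_display)
  (T : forall k, measurableType (dT k)) :
  (forall k, standard_borel R (T k)) -> standard_borel R (piT T).
Proof.
move=> h; pose dd k := projT1 (cid (h k)).
exists (pdist dd); apply: prod_polish => k; exact: (projT2 (cid (h k))).
Qed.

Lemma connect_restrict (T : finType) (e : rel T) a b : connect e a b ->
  connect [rel x y | [&& connect e a x, connect e x b, connect e a y, connect e y b & e x y]] a b.
Proof.
move=> /connectP [p pth lst].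
suff H : forall q x, connect e a x -> path e x q -> last x q = b ->
    connect [rel x y | [&& connect e a x, connect e x b, connect e a y, connect e y b & e x y]] x b.
  by apply: H pth (esym lst); exact: connect0.
elim=> [|y q IH] x ax /=; first by move=> _ ->; exact: connect0.
move=> /andP [exy pq] lq.
have ay : connect e a y by apply: connect_trans ax (connect1 exy).
have yb : connect e y b by apply/connectP; exists q.
apply: connect_trans (IH y ay pq lq); apply: connect1 => /=.
by rewrite ax ay yb exy (connect_trans (connect1 exy) yb).
Qed.

Lemma connect_map (T T' : finType) (e : rel T) (e' : rel T') (f : T -> T') :
  (forall x y, e x y -> connect e' (f x) (f y)) ->
  forall x y, connect e x y -> connect e' (f x) (f y).
Proof.
move=> h x y /connectP [p pth ->]; elim: p x pth => [|z p IH] x /=.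
  by move=> _; exact: connect0.
move=> /andP [exz pz]; apply: connect_trans (h _ _ exz) (IH _ pz).
Qed.

Lemma max_above (T : finType) (H : {set {set T}}) (A : {set T}) : A \in H ->
  exists F, (F \in [set F in H | [forall F' in H, (F \subset F') ==> (F' == F)]]) && (A \subset F).
Proof.
move=> AH.
case: (@arg_maxnP _ A (fun F1 => (F1 \in H) && (A \subset F1)) (fun F1 => #|F1|)).
  by rewrite AH subxx.
move=> F /andP [FH AF] hmax; exists F; rewrite AF andbT inE FH /=.
apply/forallP => F'; apply/implyP => F'H; apply/implyP => FF'.
rewrite eq_sym eqEcard FF' /=; apply: hmax; rewrite F'H /=.
by apply: (fintype.subset_trans AF).
Qed.

Section Solve.
Context (R : realType) (V : finType) (G : HEDG V) (dX : V -> measure_display)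
  (X : forall v, measurableType (dX v)) (W : {set V}).
Context (dO : measure_display) (Omega : measurableType dO) (P : probability Omega R)
  (dE : Fidx G -> measure_display) (E : forall F, measurableType (dE F))
  (Ev : forall F, Omega -> E F) (Xv : forall v, Omega -> X v).
Arguments Ev : clear implicits.
Arguments Xv : clear implicits.
Hypothesis hloop : forall S : {set V}, loop G S -> forall v, v \in S ->
     exists g : piT X * piT E -> X v,
       measurable_fun setT g /\
       (forall (x x' : piT X) (e e' : piT E),
          (forall u, u \in (pa G S :\: S)%SET -> x u = x' u) ->
          (forall F : Fidx G, (val F :&: S != finset.set0)%SET -> e F = e' F) ->
          g (x, e) = g (x', e')) /\
       {ae P, forall w, Xv v w = g ((fun u => Xv u w) : piT X,
                                  (fun F => Ev F w) : piT E)}.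

Definition st (w : Omega) : piT X * piT E := ((fun u => Xv u w), (fun F => Ev F w)).

Definition Anc (w : V) : {set V} := [set u | (u \in W) && connect (edgeW G W) u w].
Definition Nb (w : V) : {set V} :=
  [set u | (u \notin W) && [exists a in Anc w, hedge G u a]].

Definition Hprop (w : V) (h : piT X * piT E -> X w) :=
  measurable_fun setT h /\
  (forall (x x' : piT X) (e e' : piT E),
     (forall u, u \in Nb w -> x u = x' u) ->
     (forall F : Fidx G, [exists a in Anc w, a \in val F] -> e F = e' F) ->
     h (x, e) = h (x', e')) /\
  {ae P, forall o, Xv w o = h (st o)}.

Lemma edgeW_in x y : edgeW G W x y -> [/\ x \in W, y \in W & hedge G x y].
Proof. by move=> /and3P. Qed.

Lemma Anc_trans u w a : u \in Anc w -> a \in Anc u -> a \in Anc w.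
Proof.
rewrite !inE => /andP [uW uw] /andP [aW au]; rewrite aW /=.
exact: connect_trans au uw.
Qed.

Lemma Anc_self w : w \in W -> w \in Anc w.
Proof. by move=> wW; rewrite inE wW connect0. Qed.

Lemma Nb_sub u w : u \in Anc w -> Nb u \subset Nb w.
Proof.
move=> uw; apply/fintype.subsetP => y; rewrite !inE => /andP [yW /existsP [a /andP [au ya]]].
rewrite yW /=; apply/existsP; exists a; rewrite ya andbT; exact: Anc_trans uw au.
Qed.

Definition scc (w : V) : {set V} :=
  [set a | [&& a \in W, connect (edgeW G W) a w & connect (edgeW G W) w a]].

Lemma scc_self w : w \in W -> w \in scc w.
Proof. by move=> wW; rewrite inE wW !connect0. Qed.

Lemma scc_loop w : w \in W -> loop G (scc w).
Proof.
move=> wW; apply/andP; split; first by apply/set0Pn; exists w; exact: scc_self.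
apply/forallP => a; apply/implyP; rewrite inE => /and3P [aW aw wa].
apply/forallP => b; apply/implyP; rewrite inE => /and3P [bW bw wb].
have ab : connect (edgeW G W) a b := connect_trans aw wb.
move: (connect_restrict ab); apply: connect_sub => x y /= /and5P [ax xb ay yb exy].
have [xW yW hxy] := edgeW_in exy.
apply: connect1; rewrite /= !inE xW yW hxy /=.
by rewrite (connect_trans xb bw) (connect_trans wa ax) (connect_trans yb bw) (connect_trans wa ay).
Qed.

Lemma exists_h_n n : forall w, w \in W -> (#|Anc w| <= n)%N -> exists h, @Hprop w h.
Proof.
elim: n => [|n IH] w wW hc.
  by move: hc; rewrite leqn0 => /eqP /cards0_eq hA; move: (Anc_self wW); rewrite hA inE.
set S := scc w.
have [g [mg [gdep gae]]] := hloop (scc_loop wW) (scc_self wW).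
have hu u : exists h : piT X * piT E -> X u,
    [&& u \in W, u \in Anc w & u \notin S] -> @Hprop u h.
  case: (boolP [&& u \in W, u \in Anc w & u \notin S]); last first.
    by move=> _; exists (fun z => z.1 u).
  move=> c; move: (c) => /and3P [uW uA uS].
  suff [h hh] : exists h, @Hprop u h by exists h.
  apply: (IH u uW).
  have sub : Anc u \proper Anc w.
    rewrite finset.properEneq; apply/andP; split.
      apply/negP => /eqP e; move: uS; rewrite inE uW /=.
      have : w \in Anc u by rewrite e; exact: Anc_self.
      rewrite inE => /andP [_ wu]; move: uA; rewrite inE => /andP [_ ->].
      by rewrite wu.
    by apply/fintype.subsetP => a; exact: Anc_trans uA.
  by rewrite -ltnS; apply: leq_trans hc; exact: proper_card.
pose hh u := projT1 (cid (hu u)).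
have hhP u : [&& u \in W, u \in Anc w & u \notin S] -> @Hprop u (hh u) := projT2 (cid (hu u)).
pose repl (z : piT X * piT E) : piT X :=
  fun u => if [&& u \in W, u \in Anc w & u \notin S] then hh u z else z.1 u.
exists (fun z => g (repl z, z.2)); split.
  apply: measurableT_comp => //; apply: measurable_fun_pair => //.
  apply: measurable_into_piT => u; rewrite /repl.
  case: (boolP [&& u \in W, u \in Anc w & u \notin S]) => c.
    by case: (hhP u c).
  exact: (measurableT_comp (@measurable_eval _ _ X u) measurable_fst).
split.
  move=> x x' e e' hx he /=; apply: gdep.
    move=> u; rewrite finset.in_setD => /andP [uS]; rewrite inE => /existsP [s /andP [sS us]].
    have sA : s \in Anc w.
      by move: sS; rewrite inE => /and3P [sW sw _]; rewrite inE sW.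
    rewrite /repl; case: ifP => c.
      case: (hhP u c) => _ [dep _]; apply: dep.
        move=> y yN; apply: hx; move: c => /and3P [_ uA _].
        by apply: (fintype.subsetP (Nb_sub uA)).
      move=> F /existsP [a /andP [aA aF]]; apply: he; apply/existsP; exists a.
      by rewrite aF andbT; move: c => /and3P [_ uA _]; exact: Anc_trans uA aA.
    move: c; case: (boolP (u \in W)) => uW /=.
      rewrite uS andbT /= => /negbT; rewrite inE uW /=.
      move: sA; rewrite inE => /andP [sW sw].
      have -> // : connect (edgeW G W) u w.
      by apply: connect_trans sw; apply: connect1; rewrite /edgeW /= uW sW us.
    move=> _; apply: hx; rewrite inE uW /=; apply/existsP; exists s; by rewrite sA us.
  move=> F /set0Pn [s]; rewrite inE => /andP [sF sS]; apply: he; apply/existsP.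
  exists s; rewrite sF andbT; move: sS; rewrite !inE => /and3P [-> -> _] //.
have all : {ae P, forall o, forall u, [&& u \in W, u \in Anc w & u \notin S] -> Xv u o = hh u (st o)}.
  apply: filter_forall => u; case: (boolP [&& u \in W, u \in Anc w & u \notin S]) => c.
    by case: (hhP u c) => _ [_ ae]; apply: filterS ae => o h _.
  by apply: nearW => o.
apply: filterS2 gae all => o h1 h2 /=.
rewrite h1 /st; congr (g (_, _)); apply: functional_extensionality_dep => u.
rewrite /repl /=; case: ifP => // c; by rewrite -h2.
Qed.

Lemma exists_h w : exists h : piT X * piT E -> X w, w \in W -> @Hprop w h.
Proof.
case: (boolP (w \in W)) => wW; last by exists (fun z => z.1 w).
by have [h hh] := exists_h_n wW (leqnn _); exists h.
Qed.
End Solve.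

Section Marg.
Context (R : realType) (V : finType) (G : HEDG V) (dX : V -> measure_display)
  (X : forall v, measurableType (dX v)) (W : {set V}).
Context (dO : measure_display) (Omega : measurableType dO) (P : probability Omega R)
  (dE : Fidx G -> measure_display) (E : forall F, measurableType (dE F))
  (Ev : forall F, Omega -> E F) (f : forall v, piT X * piT E -> X v)
  (Xv : forall v, Omega -> X v).
Arguments Ev : clear implicits.
Arguments Xv : clear implicits.
Arguments f : clear implicits.
Hypothesis hEm : forall F, measurable_fun setT (Ev F).
Hypothesis hf : forall v, measurable_fun setT (f v) /\
     forall (x x' : piT X) (e e' : piT E),
       (forall u, u \in pa G [set v]%SET -> x u = x' u) ->
       (forall F : Fidx G, v \in val F -> e F = e' F) ->
       f v (x, e) = f v (x', e').
Hypothesis hse : forall v, {ae P, forall w, Xv v w = f v (st Ev Xv w)}.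
Hypothesis hloop : forall S : {set V}, loop G S -> forall v, v \in S ->
     exists g : piT X * piT E -> X v,
       measurable_fun setT g /\
       (forall (x x' : piT X) (e e' : piT E),
          (forall u, u \in (pa G S :\: S)%SET -> x u = x' u) ->
          (forall F : Fidx G, (val F :&: S != finset.set0)%SET -> e F = e' F) ->
          g (x, e) = g (x', e')) /\
       {ae P, forall w, Xv v w = g ((fun u => Xv u w) : piT X,
                                  (fun F => Ev F w) : piT E)}.

Local Notation M := (marg G W).
Definition X' (u : subV W) := X (val u).

Definition image (F : Fidx G) : {set subV W} :=
  [set u' : subV W | (val u' \in val F) || reached_from_via G W (val F) (val u')].

Lemma maxfaces_in (F : Fidx G) : val F \in hcomplex G.
Proof. by case: F => F /=; rewrite inE => /andP []. Qed.

Lemma image_in (F : Fidx G) : image F \in hcomplex M.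
Proof.
rewrite inE; apply/existsP; exists (val F); rewrite maxfaces_in /=.
apply/andP; split.
  apply/fintype.subsetP => v vF; rewrite inE; case: (boolP (v \in W)) => vW; first by rewrite orbT.
  rewrite orbF; apply/imsetP; exists (exist _ v vW) => //.
  by rewrite inE /= vF.
apply/forallP => v; apply/implyP => /imsetP [u' u'I ->].
move: u'I; rewrite inE => /orP [uF|->]; last by rewrite orbT.
by rewrite inE uF (valP u').
Qed.

Definition asg_ex (F : Fidx G) := max_above (image_in F).
Definition asg (F : Fidx G) : Fidx M :=
  exist _ (projT1 (cid (asg_ex F))) (proj1 (andP (projT2 (cid (asg_ex F))))).

Lemma asg_sub (F : Fidx G) : image F \subset val (asg F).
Proof. exact: (proj2 (andP (projT2 (cid (asg_ex F))))). Qed.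

Lemma asg_mem (F : Fidx G) (u' : subV W) : (val u' \in val F) || reached_from_via G W (val F) (val u') ->
  u' \in val (asg F).
Proof. by move=> h; apply: (fintype.subsetP (asg_sub F)); rewrite inE. Qed.


Definition EG' (j : Fidx M) := EG E asg j.
Definition ee (e' : piT EG') : piT E := fun F => e' (asg F) (exist _ F (eqxx (asg F))).

Lemma measurable_ee : measurable_fun setT ee.
Proof.
apply: measurable_into_piT => F.
exact: (measurableT_comp (@measurable_eval _ _ _ (exist _ F (eqxx (asg F)))) (@measurable_eval _ _ EG' (asg F))).
Qed.

Definition ext (x' : piT X') : piT X := fun u =>
  (if u \in W as b return ((u \in W) = b -> X u) then fun _ => Xv u point
   else fun h => x' (exist _ u (negbT h))) (erefl (u \in W)).

Lemma ext_notW x' u (h : u \notin W) : ext x' u = x' (exist _ u h).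
Proof.
rewrite /ext /=.
have H : forall b (e : (u \in W) = b), (if b as b0 return ((u \in W) = b0 -> X u) then fun _ => Xv u point
   else fun h => x' (exist _ u (negbT h))) e = x' (exist _ u h).
  case => e; first by exfalso; move: h; rewrite e.
  by congr (x' (exist _ u _)); apply: eq_irrelevance.
exact: H.
Qed.

Lemma ext_val x' (u' : subV W) : ext x' (val u') = x' u'.
Proof. by case: u' => u h; rewrite ext_notW. Qed.

Lemma measurable_ext_u u : measurable_fun setT (fun x' : piT X' => ext x' u).
Proof.
rewrite /ext /=.
have H : forall b (e : (u \in W) = b), measurable_fun setT (fun x' : piT X' =>
   (if b as b0 return ((u \in W) = b0 -> X u) then fun _ => Xv u point
   else fun h => x' (exist _ u (negbT h))) e).
  case => e; first exact: measurable_cst.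
  exact: (@measurable_eval _ _ X' (exist _ u (negbT e))).
exact: H.
Qed.

Lemma measurable_ext : measurable_fun setT ext.
Proof. apply: measurable_into_piT => u; exact: measurable_ext_u. Qed.

Definition hw_ex u := exists_h W hloop u.
Definition hw (u : V) := projT1 (cid (hw_ex u)).
Lemma hwP u : u \in W -> Hprop W P Ev Xv (hw u).
Proof. exact: (projT2 (cid (hw_ex u))). Qed.

Definition lift (z : piT X' * piT EG') : piT X :=
  fun u => if u \in W then hw u (ext z.1, ee z.2) else ext z.1 u.

Lemma measurable_lift : measurable_fun setT lift.
Proof.
apply: measurable_into_piT => u; rewrite /lift; case: (boolP (u \in W)) => uW.
  case: (hwP uW) => mh _.
  apply: (measurableT_comp mh); apply: measurable_fun_pair.
    exact: (measurableT_comp measurable_ext measurable_fst).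
  exact: (measurableT_comp measurable_ee measurable_snd).
apply: (@measurableT_comp _ _ _ _ _ _ (fun x1 : piT X' => ext x1 u) setT fst); [exact: measurable_ext_u | exact: measurable_fst].
Qed.

Definition st' (w : Omega) : piT X' * piT EG' :=
  ((fun u' => Xv (val u') w), (fun j => Yg Ev (a:=asg) (j:=j) w)).

Lemma ee_st' w : ee (st' w).2 = (st Ev Xv w).2.
Proof. by []. Qed.

Lemma lift_st' : {ae P, forall w, lift (st' w) = (st Ev Xv w).1}.
Proof.
have all : {ae P, forall w, forall u, u \in W -> Xv u w = hw u (st Ev Xv w)}.
  apply: filter_forall => u; case: (boolP (u \in W)) => uW.
    by case: (hwP uW) => _ [_ ae]; apply: filterS ae => o h _.
  by apply: nearW => o.
apply: filterS all => w h; apply: functional_extensionality_dep => u.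
rewrite /lift; case: (boolP (u \in W)) => uW; last by rewrite ext_notW.
rewrite [in RHS]/st /= h //; case: (hwP uW) => _ [dep _]; apply: dep => //.
move=> y; rewrite inE => /andP [yW _]; by rewrite ext_notW.
Qed.


Definition f' (v' : subV W) (z : piT X' * piT EG') : X' v' := f (val v') (lift z, ee z.2).

Lemma measurable_lift_ee : measurable_fun setT (fun z : piT X' * piT EG' => (lift z, ee z.2)).
Proof.
apply: measurable_fun_pair; first exact: measurable_lift.
exact: (measurableT_comp measurable_ee measurable_snd).
Qed.

Lemma f'_meas v' : measurable_fun setT (f' v').
Proof. case: (hf (val v')) => mf _; exact: (measurableT_comp mf measurable_lift_ee). Qed.

Lemma lift_eq x1 x2 e1 e2 u
  (hx : forall y, y \notin W -> forall (h : y \notin W),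
          (u \in W -> [exists a in Anc G W u, hedge G y a]) ->
          (u \notin W -> y = u) -> x1 (exist _ y h) = x2 (exist _ y h))
  (he : forall F : Fidx G, u \in W -> [exists a in Anc G W u, a \in val F] -> ee e1 F = ee e2 F) :
  lift (x1, e1) u = lift (x2, e2) u.
Proof.
rewrite /lift /=; case: (boolP (u \in W)) => uW.
  case: (hwP uW) => _ [dep _]; apply: dep.
    move=> y; rewrite inE => /andP [yW yA]; rewrite !ext_notW; apply: hx => //.
    by rewrite uW.
  by move=> F hF; apply: he.
by rewrite !ext_notW; apply: hx => // h; rewrite h in uW.
Qed.

Lemma f'_dep v' x1 x2 e1 e2 :
  (forall u', u' \in pa M [set v']%SET -> x1 u' = x2 u') ->
  (forall j : Fidx M, v' \in val j -> e1 j = e2 j) ->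
  f' v' (x1, e1) = f' v' (x2, e2).
Proof.
move=> hx he; rewrite /f' /=; case: (hf (val v')) => _ dep; apply: dep.
  move=> u; rewrite inE => /existsP [v0 /andP [] ]; rewrite inE => /eqP -> uv.
  apply: lift_eq.
    move=> y yW h hA hnW; apply: hx; rewrite inE; apply/existsP; exists v'.
    rewrite inE eqxx /= /dpath_via /=.
    case: (boolP (u \in W)) => uW; last by rewrite (hnW uW) uv.
    have /existsP [a /andP [aA ya]] := hA uW.
    move: aA; rewrite inE => /andP [aW au].
    apply/orP; right; apply/existsP; exists a; apply/existsP; exists u.
    by rewrite aW uW ya au uv.
  move=> F uW /existsP [a /andP [aA aF]]; rewrite /ee he //; apply: asg_mem.
  move: aA; rewrite inE => /andP [aW au].
  apply/orP; right; apply/existsP; exists a; rewrite aF /=; apply/existsP; exists u.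
  by rewrite aW uW au uv.
move=> F vF; rewrite /ee he //; apply: asg_mem; by rewrite vF.
Qed.

Lemma f'_ae v' : {ae P, forall w, Xv (val v') w = f' v' (st' w)}.
Proof.
apply: filterS2 (hse (val v')) lift_st' => w h1 h2.
by rewrite h1 /f' h2.
Qed.


Section loops.
Variable S' : {set subV W}.
Definition Sv : {set V} := [set val u' | u' in S'].
Definition wreach z := [exists b in Sv, [exists ur, [&& ur \in W, connect (edgeW G W) z ur & hedge G ur b]]].
Definition reachin a w := [exists u1, [&& u1 \in W, hedge G a u1 & connect (edgeW G W) u1 w]].
Definition St : {set V} := Sv :|: [set w | [&& w \in W, [exists a in Sv, reachin a w] & wreach w]].

Lemma St_cases s : s \in St -> (s \in Sv) || ((s \in W) && wreach s).
Proof. by rewrite !inE => /orP [->|/and3P [-> _ ->]] //; rewrite orbT. Qed.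

Lemma Sv_St s : s \in Sv -> s \in St.
Proof. by rewrite inE => ->. Qed.

Lemma wreach_edge u s : u \in W -> s \in St -> hedge G u s -> wreach u.
Proof.
move=> uW /St_cases /orP [sS|/andP [sW /existsP [b /andP [bS /existsP [ur /and3P [urW sur urb]]]]]] us.
  by apply/existsP; exists s; rewrite sS /=; apply/existsP; exists u; rewrite uW connect0.
apply/existsP; exists b; rewrite bS /=; apply/existsP; exists ur; rewrite urW urb andbT.
by apply: connect_trans sur; apply: connect1; rewrite /edgeW /= uW sW us.
Qed.

Lemma wreach_anc a u : a \in Anc G W u -> wreach u -> wreach a.
Proof.
rewrite inE => /andP [aW au] /existsP [b /andP [bS /existsP [ur /and3P [urW uur urb]]]].
apply/existsP; exists b; rewrite bS /=; apply/existsP; exists ur; rewrite urW urb andbT.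
exact: connect_trans au uur.
Qed.

Lemma toS2 z a : hedge G z a -> a \in W -> wreach a -> exists2 b, b \in Sv & dpath_via G W z b.
Proof.
move=> za aW /existsP [b /andP [bS /existsP [ur /and3P [urW aur urb]]]].
exists b => //; apply/orP; right; apply/existsP; exists a; apply/existsP; exists ur.
by rewrite aW urW za aur urb.
Qed.

Lemma toS z s : hedge G z s -> s \in St -> exists2 b, b \in Sv & dpath_via G W z b.
Proof.
move=> zs /St_cases /orP [sS|/andP [sW ws]]; last exact: toS2 zs sW ws.
by exists s => //; rewrite /dpath_via zs.
Qed.

Lemma in_pa z (h : z \notin W) : (exists2 b, b \in Sv & dpath_via G W z b) ->
  exist _ z h \in pa M S'.
Proof.
move=> [b /imsetP [v' v'S ->] zb]; rewrite inE; apply/existsP; exists v'.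
by rewrite v'S.
Qed.

Lemma notin_S z (h : z \notin W) : z \notin Sv -> exist _ z h \notin S'.
Proof.
apply: contra => zS; apply/imsetP; by exists (exist _ z h).
Qed.

Lemma img a (F : Fidx G) : a \in val F -> (a \in Sv) || ((a \in W) && wreach a) ->
  (val (asg F) :&: S' != finset.set0)%SET.
Proof.
move=> aF /orP [/imsetP [v' v'S av]|/andP [aW /existsP [b /andP [/imsetP [v' v'S bv] /existsP [ur /and3P [urW aur urb]]]]]].
  subst a; apply/set0Pn; exists v'; rewrite inE v'S andbT; apply: asg_mem; by rewrite aF.
subst b.
apply/set0Pn; exists v'; rewrite inE v'S andbT; apply: asg_mem.
apply/orP; right; apply/existsP; exists a; rewrite aF /=; apply/existsP; exists ur.
by rewrite aW urW aur urb.
Qed.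

Definition ES := [rel x y | [&& x \in St, y \in St & hedge G x y]].

Lemma chain_ES a b u1 ur : a \in Sv -> b \in Sv -> u1 \in W -> hedge G a u1 ->
  connect (edgeW G W) u1 ur -> ur \in W -> hedge G ur b ->
  forall z, z \in W -> connect (edgeW G W) u1 z -> connect (edgeW G W) z ur ->
  connect ES a z /\ connect ES z b.
Proof.
move=> aS bS u1W au1 u1ur urW urb.
have inSt z : z \in W -> connect (edgeW G W) u1 z -> connect (edgeW G W) z ur -> z \in St.
  move=> zW u1z zur; rewrite !inE zW /=; apply/orP; right; apply/andP; split.
    by apply/existsP; exists a; rewrite aS /=; apply/existsP; exists u1; rewrite u1W au1 u1z.
  by apply/existsP; exists b; rewrite bS /=; apply/existsP; exists ur; rewrite urW zur urb.
move=> z zW u1z zur; split.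
  apply: (@connect_trans _ _ u1).
    by apply: connect1; rewrite /ES /= Sv_St // au1 andbT (inSt u1 u1W (connect0 _ _) (connect_trans u1z zur)).
  move: (connect_restrict u1z); apply: connect_sub => x y /= /and5P [u1x xz u1y yz xy].
  have [xW yW hxy] := edgeW_in xy.
  apply: connect1; rewrite /ES /= hxy andbT (inSt x xW u1x (connect_trans xz zur)).
  by rewrite (inSt y yW u1y (connect_trans yz zur)).
apply: (@connect_trans _ _ ur).
  move: (connect_restrict zur); apply: connect_sub => x y /= /and5P [zx xur zy yur xy].
  have [xW yW hxy] := edgeW_in xy.
  apply: connect1; rewrite /ES /= hxy andbT (inSt x xW (connect_trans u1z zx) xur).
  by rewrite (inSt y yW (connect_trans u1z zy) yur).
apply: connect1; rewrite /ES /= (Sv_St bS) urb !andbT.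
exact: (inSt ur urW (connect_trans u1z zur) (connect0 _ _)).
Qed.

Lemma St_loop : loop M S' -> loop G St.
Proof.
move=> /andP [ne /forallP lp].
have [v0 v0S] := set0Pn _ ne.
have v0St : val v0 \in St by apply: Sv_St; apply/imsetP; exists v0.
have SvSv a b : a \in Sv -> b \in Sv -> connect ES a b.
  move=> /imsetP [a' a'S ->] /imsetP [b' b'S ->].
  have := lp a'; rewrite a'S /= => /forallP /(_ b'); rewrite b'S /=.
  apply: connect_map => x y /= /and3P [xS yS].
  have xSv : val x \in Sv by apply/imsetP; exists x.
  have ySv : val y \in Sv by apply/imsetP; exists y.
  rewrite /dpath_via => /orP [xy|/existsP [u1 /existsP [ur /and5P [u1W urW xu1 u1ur urb]]]].
    by apply: connect1; rewrite /ES /= xy (Sv_St xSv) (Sv_St ySv).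
  have [h1 h2] := chain_ES xSv ySv u1W xu1 u1ur urW urb urW u1ur (connect0 _ _).
  exact: connect_trans h1 h2.
have toSv z : z \in St -> (exists2 a, a \in Sv & connect ES a z) /\ (exists2 b, b \in Sv & connect ES z b).
  rewrite inE => /orP [zS|]; first by split; exists z => //; exact: connect0.
  rewrite inE => /and3P [zW /existsP [a /andP [aS /existsP [u1 /and3P [u1W au1 u1z]]]]].
  move=> /existsP [b /andP [bS /existsP [ur /and3P [urW zur urb]]]].
  have [h1 h2] := chain_ES aS bS u1W au1 (connect_trans u1z zur) urW urb zW u1z zur.
  by split; [exists a | exists b].
apply/andP; split; first by apply/set0Pn; exists (val v0).
apply/forallP => x; apply/implyP => xSt; apply/forallP => y; apply/implyP => ySt.
have [_ [b bS xb]] := toSv x xSt.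
have [[a aS ay] _] := toSv y ySt.
exact: connect_trans xb (connect_trans (SvSv b a bS aS) ay).
Qed.

End loops.

Lemma marg_loop S' : loop M S' -> forall v', v' \in S' ->
  exists g' : piT X' * piT EG' -> X' v',
    measurable_fun setT g' /\
    (forall (x x' : piT X') (e e' : piT EG'),
       (forall u, u \in (pa M S' :\: S')%SET -> x u = x' u) ->
       (forall F : Fidx M, (val F :&: S' != finset.set0)%SET -> e F = e' F) ->
       g' (x, e) = g' (x', e')) /\
    {ae P, forall w, Xv (val v') w = g' (st' w)}.
Proof.
move=> lS v' v'S.
have vSt : val v' \in St S' by apply: Sv_St; apply/imsetP; exists v'.
have [g [mg [gdep gae]]] := hloop (St_loop lS) vSt.
exists (fun z => g (lift z, ee z.2)); split; first exact: (measurableT_comp mg measurable_lift_ee).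
split.
  move=> x1 x2 e1 e2 hx he /=; apply: gdep.
    move=> u; rewrite finset.in_setD => /andP [uSt]; rewrite inE => /existsP [s /andP [sSt us]].
    apply: lift_eq.
      move=> y yW h hA hnW; apply: hx; rewrite finset.in_setD; apply/andP; split.
        apply: notin_S; case: (boolP (u \in W)) => uW; last by rewrite (hnW uW); apply: contra uSt; exact: Sv_St.
        have /existsP [a /andP [aA ya]] := hA uW.
        apply: contra uSt => yS; rewrite !inE uW /=; apply/orP; right; apply/andP; split.
          apply/existsP; exists y; rewrite yS /=; apply/existsP; exists a.
          by move: aA; rewrite inE => /andP [-> ->]; rewrite ya.
        exact: wreach_edge uW sSt us.
      apply: in_pa; case: (boolP (u \in W)) => uW; last by rewrite (hnW uW); exact: toS us sSt.
      have /existsP [a /andP [aA ya]] := hA uW.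
      apply: toS2 ya _ _; first by move: aA; rewrite inE => /andP [].
      exact: wreach_anc aA (wreach_edge uW sSt us).
    move=> F uW /existsP [a /andP [aA aF]]; rewrite /ee he //; apply: (img aF).
    apply/orP; right; rewrite (wreach_anc aA (wreach_edge uW sSt us)) andbT.
    by move: aA; rewrite inE => /andP [].
  move=> F /set0Pn [s]; rewrite inE => /andP [sF sSt]; rewrite /ee he //.
  exact: (img sF (St_cases sSt)).
apply: filterS2 gae lift_st' => w h1 h2 /=; by rewrite h1 h2.
Qed.

Lemma measurable_restr : measurable_fun setT (restr W X).
Proof. apply: measurable_into_piT => u; exact: (@measurable_eval _ _ X (val u)). Qed.

Lemma marg_lsSEP (PV : probability (piT X) R)
  (hEsb : forall F, standard_borel R (E F)) (hind : mutually_independent P Ev)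
  (hXm : forall v, measurable_fun setT (Xv v))
  (hlaw : forall B : set (piT X), measurable B ->
     P ((fun w => (fun u => Xv u w) : piT X) @^-1` B) = PV B) :
  lsSEP M (fun u : subV W => X (val u)) (marginal W X PV).
Proof.
exists dO, Omega, P.
exists (fun j => (cylinders (fun k : grp asg j => E (\val k))).-sigma%mdisp).
exists (fun j => (piT (fun k : grp asg j => E (val k)) : measurableType _)).
exists (fun j => Yg Ev (a:=asg) (j:=j)), f', (fun u' => Xv (val u')).
split; first by move=> j; apply: prod_standard_borel => k; exact: hEsb.
split; first by move=> j; exact: measurable_Yg.
split; first exact: group_indep.
split; first by move=> u'; exact: hXm.
split; first by move=> v'; split; [exact: f'_meas | exact: f'_dep].
split; first by move=> v'; exact: f'_ae.
split; last exact: marg_loop.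
move=> B mB; rewrite /marginal -hlaw //.
by have := measurable_restr measurableT mB; rewrite setTI.
Qed.

End Marg.

Local Close Scope ring_scope.
Local Close Scope classical_set_scope.

Theorem mainTheorem12 (R : realType) (V : finType) (G : HEDG V)
  (dX : V -> measure_display) (X : forall v : V, measurableType (dX v))
  (PV : probability (piT X) R) :
  is_HEDG G ->
  (forall v : V, standard_borel R (X v)) ->
  lsSEP G X PV ->
  forall W : {set V},
    lsSEP (marg G W) (fun u : subV W => X (val u)) (marginal W X PV).
Proof.
move=> _ _ [dO [Om [P [dE [E [Ev [f [Xv H]]]]]]]] W.
case: H => hEsb [hEm [hind [hXm [hf [hse [hlaw hloop]]]]]].
exact: (marg_lsSEP W hEm hf hse hloop hEsb hind hXm hlaw).
Qed.
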